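(* Let $g$ be a constant indefinite pseudo-Riemann metric on $\mathbb R^4$ (i.e. of signature $(-+++)$, $(+---)$ or $(--++)$), let $C_1\in\mathbb R\setminus\{0\}$ and $C_2\in\mathbb R$, and let $\kappa=C_1\ast_g+C_2\operatorname{Id}\in\Omega^2_2(\mathbb R^4)$. Then $\kappa$ is not decomposable.
   Context: A tensor on $\mathbb R^4$ is constant if its components are constant in a fixed global coordinate system $\{x^i\}_{i=0}^3$. $\varepsilon_{ijkl}$ denotes the Levi-Civita permutation symbol. $\Omega^2_2(\mathbb R^4)$ is the space of tensor fields $\kappa=\frac18\kappa^{ij}_{rs}\,dx^r\wedge dx^s\otimes\partial_i\wedge\partial_j$ (components antisymmetric in $ij$ and $rs$), acting on 2-forms by $\kappa(\frac12F_{ij}dx^i\wedge dx^j)=\frac12G_{ij}dx^i\wedge dx^j$, $G_{ij}=\frac12\kappa^{ab}_{ij}F_{ab}$. $\operatorname{Id}^{ij}_{rs}=\delta^i_r\delta^j_s-\delta^i_s\delta^j_r$. Hodge star: $(\ast_g)^{ij}_{rs}=\sqrt{|\det g|}\,g^{ia}g^{jb}\varepsilon_{abrs}$ with $g^{ij}$ the inverse of $g_{ij}$. For a bivector $A=\frac12A^{ij}\partial_i\wedge\partial_j$ and 2-form $F$, $F(A)=\frac12F_{ij}A^{ij}$. A plane wave for $\kappa$ is a pair $F=\operatorname{Re}\{e^{i\Phi}X\}$, $G=\operatorname{Re}\{e^{i\Phi}Y\}$ with $\Phi:\mathbb R^4\to\mathbb R$, $d\Phi$ constant and nonzero, $X,Y$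 constant complex 2-forms not both zero, solving $dF=0$, $dG=0$, $G=\kappa(F)$. $\kappa$ (constant) is decomposable if there exist nonzero constant bivectors $A,B$ such that every plane wave $F,G$ of $\kappa$ satisfies $F(A)=0$ identically or $F(B)=0$ identically. *)

(* Defs.v *)
From Stdlib Require Import Reals.
Open Scope R_scope.

(* Coordinate indices 0..3 of the fixed global chart {x^i} on R^4. *)
Inductive idx : Set := I0 | I1 | I2 | I3.

Definition idx_eq_dec (a b : idx) : {a = b} + {a <> b}.
Proof. decide equality. Defined.

Definition idxR (a : idx) : R :=
  match a with I0 => 0 | I1 => 1 | I2 => 2 | I3 => 3 end.

Definition sumI (f : idx -> R) : R := f I0 + f I1 + f I2 + f I3.

Definition delta (a b : idx) : R := if idx_eq_dec a b then 1 else 0.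

(* Levi-Civita symbol: sign of the permutation (0 if an index repeats),
   computed as the normalised Vandermonde product. *)
Definition eps (a b c d : idx) : R :=
  let A := idxR a in let B := idxR b in let C := idxR c in let D := idxR d in
  ((B - A) * (C - A) * (D - A) * (C - B) * (D - B) * (D - C)) / 12.

Definition point := idx -> R.
Definition mat := idx -> idx -> R.                 (* g_{ij}, g^{ij}, 2-forms, bivectors *)
Definition tensor22 := idx -> idx -> idx -> idx -> R. (* kappa^{ij}_{rs} = k i j r s *)

Definition symmetric (g : mat) : Prop := forall i j, g i j = g j i.
Definition antisymmetric (X : mat) : Prop := forall i j, X i j = - X j i.

Definition det4 (g : mat) : R :=
  sumI (fun a => sumI (fun b => sumI (fun c => sumI (fun d =>
    eps a b c d * g I0 a * g I1 b * g I2 c * g I3 d)))).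

Definition is_inverse (g ginv : mat) : Prop :=
  forall i k, sumI (fun j => g i j * ginv j k) = delta i k.

Definition indefinite (g : mat) : Prop :=
  (exists v : idx -> R, sumI (fun i => sumI (fun j => g i j * v i * v j)) > 0) /\
  (exists w : idx -> R, sumI (fun i => sumI (fun j => g i j * w i * w j)) < 0).

Definition Id22 : tensor22 :=
  fun i j r s => delta i r * delta j s - delta i s * delta j r.

Definition hodge (g ginv : mat) : tensor22 :=
  fun i j r s => sqrt (Rabs (det4 g)) *
    sumI (fun a => sumI (fun b => ginv i a * ginv j b * eps a b r s)).

Definition kappa_of (g ginv : mat) (C1 C2 : R) : tensor22 :=
  fun i j r s => C1 * hodge g ginv i j r s + C2 * Id22 i j r s.

Definition act (k : tensor22) (F : mat) : mat :=
  fun i j => / 2 * sumI (fun a => sumI (fun b => k a b i j * F a b)).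

Definition pair (F A : mat) : R :=
  / 2 * sumI (fun i => sumI (fun j => F i j * A i j)).

Definition shift (x : point) (a : idx) (t : R) : point :=
  fun b => if idx_eq_dec a b then x b + t else x b.

Definition partial_is (f : point -> R) (a : idx) (x : point) (l : R) : Prop :=
  derivable_pt_lim (fun t => f (shift x a t)) 0 l.

(* dF = 0 for a 2-form field F (components F x i j). *)
Definition closed2 (F : point -> mat) : Prop :=
  forall (x : point) (i j k : idx), exists di dj dk : R,
    partial_is (fun y => F y j k) i x di /\
    partial_is (fun y => F y k i) j x dj /\
    partial_is (fun y => F y i j) k x dk /\
    di + dj + dk = 0.

(* Re{ e^{i Phi} X } with X = Xr + i Xi. *)
Definition wave (Phi : point -> R) (Xr Xi : mat) : point -> mat :=
  fun x i j => cos (Phi x) * Xr i j - sin (Phi x) * Xi i j.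

Definition plane_wave (k : tensor22) (Phi : point -> R) (Xr Xi Yr Yi : mat) : Prop :=
  (exists xi : idx -> R, (exists a, xi a <> 0) /\
     forall x a, partial_is Phi a x (xi a)) /\
  antisymmetric Xr /\ antisymmetric Xi /\ antisymmetric Yr /\ antisymmetric Yi /\
  ~ (forall i j, Xr i j = 0 /\ Xi i j = 0 /\ Yr i j = 0 /\ Yi i j = 0) /\
  closed2 (wave Phi Xr Xi) /\ closed2 (wave Phi Yr Yi) /\
  (forall x, wave Phi Yr Yi x = act k (wave Phi Xr Xi x)).

Definition nonzero_bivector (A : mat) : Prop :=
  antisymmetric A /\ exists i j, A i j <> 0.

Definition decomposable (k : tensor22) : Prop :=
  exists A B : mat, nonzero_bivector A /\ nonzero_bivector B /\
    forall (Phi : point -> R) (Xr Xi Yr Yi : mat),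
      plane_wave k Phi Xr Xi Yr Yi ->
      (forall x, pair (wave Phi Xr Xi x) A = 0) \/
      (forall x, pair (wave Phi Xr Xi x) B = 0).

(* Main.v *)
From Stdlib Require Import Reals Lra Lia Psatz List FunctionalExtensionality Classical.
From Coquelicot Require Import Coquelicot.
Require Import Defs.
Open Scope R_scope.

Fixpoint isPoly (d : nat) (f : R -> R) : Prop :=
  match d with
  | O => exists c, forall t, f t = c
  | S d' => exists c q, isPoly d' q /\ forall t, f t = c + t * q t
  end.

Lemma isPoly_ext d : forall f g, (forall t, f t = g t) -> isPoly d f -> isPoly d g.
Proof.
  induction d; simpl; intros f g E H.
  - destruct H as [c Hc]. exists c. intros t. rewrite <- E. auto.
  - destruct H as [c [q [Hq Hf]]]. exists c, q. split; auto.
    intros t. rewrite <- E. auto.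
Qed.

Lemma isPoly_S d : forall f, isPoly d f -> isPoly (S d) f.
Proof.
  induction d; simpl; intros f H.
  - destruct H as [c Hc]. exists c, (fun _ => 0). split.
    + exists 0. auto.
    + intros t. rewrite Hc. ring.
  - destruct H as [c [q [Hq Hf]]]. exists c, q. split; [apply IHd; auto | auto].
Qed.

Lemma isPoly_le d e f : (d <= e)%nat -> isPoly d f -> isPoly e f.
Proof.
  induction 1; auto. intros Hp. apply isPoly_S. auto.
Qed.

Lemma isPoly_const d c : isPoly d (fun _ => c).
Proof.
  apply isPoly_le with O; [lia|]. exists c; auto.
Qed.

Lemma isPoly_add d : forall f g, isPoly d f -> isPoly d g -> isPoly d (fun t => f t + g t).
Proof.
  induction d; simpl; intros f g Hf Hg.
  - destruct Hf as [c Hc], Hg as [c' Hc']. exists (c + c'). intros; rewrite Hc, Hc'; auto.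
  - destruct Hf as [c [q [Hq Hf]]], Hg as [c' [q' [Hq' Hg]]].
    exists (c + c'), (fun t => q t + q' t). split; auto.
    intros t; rewrite Hf, Hg; ring.
Qed.

Lemma isPoly_scal d : forall a f, isPoly d f -> isPoly d (fun t => a * f t).
Proof.
  induction d; simpl; intros a f Hf.
  - destruct Hf as [c Hc]. exists (a * c). intros; rewrite Hc; auto.
  - destruct Hf as [c [q [Hq Hf]]].
    exists (a * c), (fun t => a * q t). split; auto.
    intros t; rewrite Hf; ring.
Qed.

Lemma isPoly_tmul d f : isPoly d f -> isPoly (S d) (fun t => t * f t).
Proof. intros H. simpl. exists 0, f. split; auto. intros; ring. Qed.

Lemma isPoly_mul d : forall e f g, isPoly d f -> isPoly e g -> isPoly (d + e) (fun t => f t * g t).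
Proof.
  induction d; simpl; intros e f g Hf Hg.
  - destruct Hf as [c Hc]. eapply isPoly_ext; [|apply (isPoly_scal e c g Hg)].
    intros; simpl; rewrite Hc; auto.
  - destruct Hf as [c [q [Hq Hf]]].
    change (isPoly (S (d + e)) (fun t => f t * g t)).
    eapply isPoly_ext; [| apply (isPoly_add (S (d + e)) (fun t => c * g t) (fun t => t * (q t * g t)))].
    + intros t; simpl; rewrite Hf; ring.
    + apply isPoly_le with e; [lia|]. apply isPoly_scal; auto.
    + apply isPoly_tmul. apply IHd; auto.
Qed.

Lemma isPoly_factor d : forall f, isPoly (S d) f -> forall a, exists q, isPoly d q /\ forall t, f t = f a + (t - a) * q t.
Proof.
  induction d; intros f Hf a.
  - destruct Hf as [c [q [[k Hk] Hf]]]. exists (fun _ => k). split.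
    + exists k; auto.
    + intros t. rewrite !Hf, !Hk. ring.
  - destruct Hf as [c [p [Hp Hf]]].
    destruct (IHd p Hp a) as [r [Hr Hpr]].
    exists (fun t => p a + t * r t). split.
    + simpl. exists (p a), r. split; auto.
    + intros t. rewrite !Hf, (Hpr t). ring.
Qed.

Lemma isPoly_roots d : forall f, isPoly d f -> (exists t0, f t0 <> 0) ->
  exists l : list R, forall t, f t = 0 -> In t l.
Proof.
  induction d; intros f Hf [t0 Ht0].
  - destruct Hf as [c Hc]. exists nil. intros t Ht. rewrite Hc in Ht. rewrite Hc in Ht0. lra.
  - destruct (classic (exists a, f a = 0)) as [[a Ha] | Hno].
    + destruct (isPoly_factor d f Hf a) as [q [Hq Hfq]].
      destruct (IHd q Hq) as [l Hl].
      { exists t0. intros E. apply Ht0. rewrite Hfq, Ha, E. ring. }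
      exists (a :: l). intros t Ht. rewrite Hfq, Ha in Ht.
      destruct (Req_dec t a) as [->|Hne]; [left; auto|right].
      apply Hl. rewrite Rplus_0_l in Ht. apply Rmult_integral in Ht. destruct Ht as [Ht|Ht]; auto.
      exfalso; apply Hne; lra.
    + exists nil. intros t Ht. exfalso; apply Hno; eauto.
Qed.

Lemma list_bound (l : list R) : exists M, forall x, In x l -> x < M.
Proof.
  induction l as [|a l [M HM]].
  - exists 0. intros x [].
  - exists (Rmax (a + 1) M). intros x [->|Hx].
    + pose proof (Rmax_l (x+1) M). lra.
    + pose proof (Rmax_r (a+1) M). specialize (HM x Hx). lra.
Qed.

Definition Poly1 (f : R -> R) := exists d, isPoly d f.

Lemma Poly1_common f g : Poly1 f -> Poly1 g -> (exists a, f a <> 0) -> (exists b, g b <> 0) ->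
  exists t, f t <> 0 /\ g t <> 0.
Proof.
  intros [d Hf] [e Hg] Ha Hb.
  destruct (isPoly_roots d f Hf Ha) as [lf Hlf].
  destruct (isPoly_roots e g Hg Hb) as [lg Hlg].
  destruct (list_bound (lf ++ lg)) as [M HM].
  exists M. split; intros E.
  - specialize (HM M (in_or_app _ _ _ (or_introl (Hlf M E)))). lra.
  - specialize (HM M (in_or_app _ _ _ (or_intror (Hlg M E)))). lra.
Qed.

Lemma Poly1_const c : Poly1 (fun _ => c).
Proof. exists O. exists c. auto. Qed.
Lemma Poly1_id : Poly1 (fun t => t).
Proof. exists 1%nat. simpl. exists 0, (fun _ => 1). split. exists 1; auto. intros; ring. Qed.
Lemma Poly1_add f g : Poly1 f -> Poly1 g -> Poly1 (fun t => f t + g t).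
Proof.
  intros [d Hf] [e Hg]. exists (Nat.max d e). apply isPoly_add.
  apply isPoly_le with d; [lia|auto]. apply isPoly_le with e; [lia|auto].
Qed.
Lemma Poly1_mul f g : Poly1 f -> Poly1 g -> Poly1 (fun t => f t * g t).
Proof. intros [d Hf] [e Hg]. exists (d + e)%nat. apply isPoly_mul; auto. Qed.
Lemma Poly1_opp f : Poly1 f -> Poly1 (fun t => - f t).
Proof.
  intros [d Hf]. exists d. eapply isPoly_ext; [|apply (isPoly_scal d (-1) f Hf)].
  intros; simpl; ring.
Qed.

Definition vec := idx -> R.
Definition Hf (h : mat) (x y : vec) : R := sumI (fun b => sumI (fun c => x b * h b c * y c)).
Definition dot (x y : vec) : R := sumI (fun i => x i * y i).
Definition upv (h : mat) (x : vec) : vec := fun c => sumI (fun a => h a c * x a).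
Definition gv (g : mat) (x : vec) : vec := fun b => sumI (fun a => g b a * x a).
Definition mA (A : mat) (x : vec) : vec := fun j => sumI (fun i => x i * A i j).
Definition lc (a : R) (x : vec) (b : R) (y : vec) : vec := fun i => a * x i + b * y i.
Definition ev (k : idx) : vec := fun i => delta k i.

Lemma sumI_ext f f' : (forall i, f i = f' i) -> sumI f = sumI f'.
Proof. intros E; unfold sumI; rewrite !E; auto. Qed.

Lemma sum_delta_r (f : idx -> R) c : sumI (fun a => f a * delta a c) = f c.
Proof. unfold sumI, delta; destruct c; simpl; ring. Qed.
Lemma sum_delta_r' (f : idx -> R) c : sumI (fun a => delta a c * f a) = f c.
Proof. unfold sumI, delta; destruct c; simpl; ring. Qed.
Lemma sum_delta_l (f : idx -> R) c : sumI (fun a => delta c a * f a) = f c.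
Proof. unfold sumI, delta; destruct c; simpl; ring. Qed.

Ltac symrw H :=
  try rewrite (H I1 I0); try rewrite (H I2 I0); try rewrite (H I3 I0);
  try rewrite (H I2 I1); try rewrite (H I3 I1); try rewrite (H I3 I2).

Lemma inv_props (g h : mat) : symmetric g -> is_inverse g h ->
  (forall i j, h i j = h j i) /\ (forall i k, sumI (fun j => h i j * g j k) = delta i k).
Proof.
  intros Hg Hi.
  assert (Hs : forall i j, h i j = h j i).
  { intros i j.
    assert (T : sumI (fun l => h l i * sumI (fun k => g l k * h k j)) =
                sumI (fun k => sumI (fun l => g k l * h l i) * h k j)).
    { unfold sumI; symrw Hg; ring. }
    rewrite (sumI_ext _ (fun l => h l i * delta l j)) in T by (intros; rewrite Hi; auto).
    rewrite (sumI_ext (fun k => sumI (fun l => g k l * h l i) * h k j) (fun k => delta k i * h k j)) in T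
      by (intros; rewrite Hi; auto).
    rewrite sum_delta_r, sum_delta_r' in T. auto. }
  split; auto.
  intros i k.
  transitivity (sumI (fun j => g k j * h j i)).
  { destruct i, k; unfold sumI; symrw Hg; symrw Hs; ring. }
  rewrite Hi. unfold delta. destruct (idx_eq_dec k i), (idx_eq_dec i k); subst; congruence.
Qed.

Lemma Hf_sym h x y : (forall i j, h i j = h j i) -> Hf h x y = Hf h y x.
Proof. intros Hs; unfold Hf, sumI; symrw Hs; ring. Qed.
Lemma Hf_lc_l h a x b y z : Hf h (lc a x b y) z = a * Hf h x z + b * Hf h y z.
Proof. unfold Hf, lc, sumI; ring. Qed.
Lemma Hf_lc_r h a x b y z : Hf h z (lc a x b y) = a * Hf h z x + b * Hf h z y.
Proof. unfold Hf, lc, sumI; ring. Qed.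
Lemma dot_upv h x y : dot x (upv h y) = Hf h y x.
Proof. unfold dot, upv, Hf, sumI; ring. Qed.
Lemma dot_comm x y : dot x y = dot y x.
Proof. unfold dot, sumI; ring. Qed.
Lemma dot_lc_r a x b y z : dot z (lc a x b y) = a * dot z x + b * dot z y.
Proof. unfold dot, lc, sumI; ring. Qed.
Lemma mA_lc A a x b y j : mA A (lc a x b y) j = a * mA A x j + b * mA A y j.
Proof. unfold mA, lc, sumI; ring. Qed.
Lemma mA_ev A i j : mA A (ev i) j = A i j.
Proof. unfold mA, ev, sumI, delta; destruct i; simpl; ring. Qed.
Lemma Hf_ev h i k : Hf h (ev i) (ev k) = h i k.
Proof. unfold Hf, ev, sumI, delta; destruct i, k; simpl; ring. Qed.
Lemma dot_ev a i : dot a (ev i) = a i.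
Proof. unfold dot, ev, sumI, delta; destruct i; simpl; ring. Qed.

Lemma Hf_gv g h v z : symmetric g -> is_inverse g h -> Hf h (gv g v) z = dot v z.
Proof.
  intros Hg Hi.
  transitivity (sumI (fun c => sumI (fun a => v a * sumI (fun b => g a b * h b c)) * z c)).
  { unfold Hf, gv, sumI; symrw Hg; ring. }
  transitivity (sumI (fun c => sumI (fun a => v a * delta a c) * z c)).
  { apply sumI_ext; intros c; f_equal; apply sumI_ext; intros a; rewrite Hi; auto. }
  apply sumI_ext; intros c; rewrite sum_delta_r; auto.
Qed.

Lemma gv_upv g h x b : symmetric g -> is_inverse g h -> gv g (upv h x) b = x b.
Proof.
  intros Hg Hi. destruct (inv_props g h Hg Hi) as [Hs _].
  transitivity (sumI (fun a => sumI (fun c => g b c * h c a) * x a)).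
  { unfold gv, upv, sumI; symrw Hs; ring. }
  rewrite (sumI_ext _ (fun a => delta b a * x a)) by (intros; rewrite Hi; auto).
  apply sum_delta_l.
Qed.

Ltac antirw A HA :=
  let H0 := fresh in
  assert (H0 : forall i, A i i = 0) by (intros i; specialize (HA i i); lra);
  try rewrite (H0 I0); try rewrite (H0 I1); try rewrite (H0 I2); try rewrite (H0 I3);
  try rewrite (HA I1 I0); try rewrite (HA I2 I0); try rewrite (HA I3 I0);
  try rewrite (HA I2 I1); try rewrite (HA I3 I1); try rewrite (HA I3 I2); clear H0.

Lemma anti_dot A x y : antisymmetric A -> dot x (mA A y) = - dot y (mA A x).
Proof. intros HA. unfold dot, mA, sumI. antirw A HA. ring. Qed.
Lemma anti_dot0 A x : antisymmetric A -> dot x (mA A x) = 0.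
Proof. intros HA. pose proof (anti_dot A x x HA). lra. Qed.

Definition line (y1 y2 : vec) (t : R) : vec := fun i => y1 i + t * (y2 i - y1 i).
Definition PolyF (P : vec -> R) := forall y1 y2, Poly1 (fun t => P (line y1 y2 t)).

Lemma PolyF_const c : PolyF (fun _ => c).
Proof. intros y1 y2. apply Poly1_const. Qed.
Lemma PolyF_coord i : PolyF (fun y => y i).
Proof.
  intros y1 y2. unfold line. apply Poly1_add. apply Poly1_const.
  apply Poly1_mul. apply Poly1_id. apply Poly1_const.
Qed.
Lemma PolyF_add P1 P2 : PolyF P1 -> PolyF P2 -> PolyF (fun y => P1 y + P2 y).
Proof. intros H1 H2 y1 y2. apply Poly1_add; auto. Qed.
Lemma PolyF_mul P1 P2 : PolyF P1 -> PolyF P2 -> PolyF (fun y => P1 y * P2 y).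
Proof. intros H1 H2 y1 y2. apply Poly1_mul; auto. Qed.
Lemma PolyF_opp P1 : PolyF P1 -> PolyF (fun y => - P1 y).
Proof. intros H1 y1 y2. apply Poly1_opp; auto. Qed.
Lemma PolyF_sub P1 P2 : PolyF P1 -> PolyF P2 -> PolyF (fun y => P1 y - P2 y).
Proof. intros H1 H2. unfold Rminus. apply PolyF_add; auto. apply PolyF_opp; auto. Qed.

Lemma PolyF_common P1 P2 y1 y2 : PolyF P1 -> PolyF P2 -> P1 y1 <> 0 -> P2 y2 <> 0 ->
  exists y, P1 y <> 0 /\ P2 y <> 0.
Proof.
  intros H1 H2 N1 N2.
  destruct (Poly1_common (fun t => P1 (line y1 y2 t)) (fun t => P2 (line y1 y2 t)) (H1 y1 y2) (H2 y1 y2))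
    as [t [T1 T2]].
  - exists 0. replace (line y1 y2 0) with y1; auto.
    apply functional_extensionality; intros i; unfold line; ring.
  - exists 1. replace (line y1 y2 1) with y2; auto.
    apply functional_extensionality; intros i; unfold line; ring.
  - exists (line y1 y2 t); auto.
Qed.

Ltac polyF :=
  match goal with
  | |- PolyF (fun y => ?c) => apply PolyF_const
  | |- PolyF (fun y => y ?i) => apply (PolyF_coord i)
  | |- PolyF (fun y => _ + _) => apply PolyF_add; polyF
  | |- PolyF (fun y => _ - _) => apply PolyF_sub; polyF
  | |- PolyF (fun y => _ * _) => apply PolyF_mul; polyF
  | |- PolyF (fun y => - _) => apply PolyF_opp; polyF
  end.

Lemma rank_contra g h a b lam : symmetric g -> is_inverse g h ->
  (forall z, Hf h z z = lam * dot a z * dot b z) -> False.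
Proof.
  intros Hg Hi HQ.
  destruct (inv_props g h Hg Hi) as [Hs _].
  assert (Hh : forall j k, h j k = lam / 2 * (a j * b k + a k * b j)).
  { intros j k.
    pose proof (HQ (lc 1 (ev j) 1 (ev k))) as E1.
    pose proof (HQ (ev j)) as E2. pose proof (HQ (ev k)) as E3.
    rewrite Hf_lc_l, !Hf_lc_r, !dot_lc_r, !dot_ev, !Hf_ev in E1.
    rewrite !dot_ev, !Hf_ev in E2, E3.
    rewrite (Hs k j) in E1. nra. }
  set (al := gv g a). set (be := gv g b).
  assert (Hd : forall i k, delta i k = lam / 2 * (al i * b k + be i * a k)).
  { intros i k. rewrite <- Hi. rewrite (sumI_ext _ (fun j => g i j * (lam / 2 * (a j * b k + a k * b j))))
      by (intros; rewrite Hh; auto).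
    unfold al, be, gv, sumI; ring. }
  assert (Hdet : forall x00 x01 x02 x10 x11 x12 x20 x21 x22 : R,
     x00 = delta I0 I0 -> x01 = delta I0 I1 -> x02 = delta I0 I2 ->
     x10 = delta I1 I0 -> x11 = delta I1 I1 -> x12 = delta I1 I2 ->
     x20 = delta I2 I0 -> x21 = delta I2 I1 -> x22 = delta I2 I2 ->
     x00 * (x11 * x22 - x12 * x21) - x01 * (x10 * x22 - x12 * x20) + x02 * (x10 * x21 - x11 * x20) = 1).
  { intros; subst; unfold delta; simpl; ring. }
  specialize (Hdet _ _ _ _ _ _ _ _ _ (eq_sym (Hd I0 I0)) (eq_sym (Hd I0 I1)) (eq_sym (Hd I0 I2)) (eq_sym (Hd I1 I0)) (eq_sym (Hd I1 I1)) (eq_sym (Hd I1 I2))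
     (eq_sym (Hd I2 I0)) (eq_sym (Hd I2 I1)) (eq_sym (Hd I2 I2))).
  ring_simplify in Hdet. lra.
Qed.

Definition Dm (A h : mat) (x : vec) : R :=
  dot (upv h x) (upv h x) * dot (mA A x) (mA A x) - dot (upv h x) (mA A x) * dot (upv h x) (mA A x).

Lemma sumsq0 (f : vec) : sumI (fun j => f j * f j) = 0 -> forall j, f j = 0.
Proof. unfold sumI; intros H j; destruct j; nra. Qed.

Lemma dot_pos u : (exists c, u c <> 0) -> dot u u > 0.
Proof.
  intros [c Hc]. unfold dot, sumI.
  destruct c; pose proof (Rsqr_pos_lt _ Hc); unfold Rsqr in *; nra.
Qed.

Lemma dot_scal y a u : dot y (fun j => a * u j) = a * dot y u.
Proof. unfold dot, sumI; ring. Qed.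

Lemma dot_ext y f f' : (forall j, f j = f' j) -> dot y f = dot y f'.
Proof. intros E; unfold dot; apply sumI_ext; intros; rewrite E; auto. Qed.

Lemma eig (u m : vec) : dot u u <> 0 -> dot u u * dot m m - dot u m * dot u m = 0 ->
  forall j, m j = (dot u m / dot u u) * u j.
Proof.
  intros Hu HD.
  assert (Id : forall U V, sumI (fun j => (m j * U - V * u j) * (m j * U - V * u j)) =
     U * U * dot m m - 2 * U * V * dot u m + V * V * dot u u).
  { intros; unfold dot, sumI; ring. }
  specialize (Id (dot u u) (dot u m)).
  assert (Z : sumI (fun j => (m j * dot u u - dot u m * u j) * (m j * dot u u - dot u m * u j)) = 0).
  { rewrite Id. transitivity (dot u u * (dot u u * dot m m - dot u m * dot u m)); [ring|].
    rewrite HD; ring. }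
  intros j. pose proof (sumsq0 (fun j => m j * dot u u - dot u m * u j) Z j) as Zj.
  simpl in Zj. apply Rmult_eq_reg_r with (dot u u); auto.
  unfold Rdiv. replace (dot u m * / dot u u * u j * dot u u) with (dot u m * u j * (dot u u * / dot u u)) by ring.
  rewrite Rinv_r; auto. lra.
Qed.

Lemma nz_upv g h x : symmetric g -> is_inverse g h -> (exists i, x i <> 0) -> exists c, upv h x c <> 0.
Proof.
  intros Hg Hi [i Hx]. apply NNPP; intros N. apply Hx.
  rewrite <- (gv_upv g h x i Hg Hi). unfold gv.
  rewrite (sumI_ext _ (fun _ => 0)). unfold sumI; ring.
  intros a. apply NNPP; intros Na. apply N. exists a. intros E. apply Na. rewrite E; ring.
Qed.

Lemma Hf_nz_l h x z : Hf h x z <> 0 -> exists i, x i <> 0.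
Proof.
  intros N. apply NNPP; intros N2. apply N. unfold Hf.
  rewrite (sumI_ext _ (fun _ => 0)). unfold sumI; ring.
  intros b. replace (x b) with 0. unfold sumI; ring.
  apply NNPP; intros Nb. apply N2. exists b. auto.
Qed.

Lemma Hf_nz_r h x z : (forall i j, h i j = h j i) -> Hf h x z <> 0 -> exists i, z i <> 0.
Proof. intros Hs N. rewrite Hf_sym in N; auto. eapply Hf_nz_l; eauto. Qed.

Lemma eig_Dm g h A x : symmetric g -> is_inverse g h -> (exists i, x i <> 0) -> Dm A h x = 0 ->
  exists a, forall j, mA A x j = a * upv h x j.
Proof.
  intros Hg Hi Hx HD.
  destruct (nz_upv g h x Hg Hi Hx) as [c Hc].
  pose proof (dot_pos _ (ex_intro _ c Hc)).
  eexists. apply eig. lra. exact HD.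
Qed.

Lemma pairrel h A x y a b : (forall i j, h i j = h j i) -> antisymmetric A ->
  (forall j, mA A x j = a * upv h x j) -> (forall j, mA A y j = b * upv h y j) ->
  Hf h x y <> 0 -> a = - b.
Proof.
  intros Hs HA Ex Ey N.
  pose proof (anti_dot A y x HA) as T.
  rewrite (dot_ext y (mA A x) (fun j => a * upv h x j)) in T by auto.
  rewrite (dot_ext x (mA A y) (fun j => b * upv h y j)) in T by auto.
  rewrite !dot_scal, !dot_upv in T. rewrite (Hf_sym h y x Hs) in T.
  apply Rmult_eq_reg_r with (Hf h x y); auto. lra.
Qed.

Lemma triple g h A x1 x2 x3 : symmetric g -> is_inverse g h -> antisymmetric A ->
  Dm A h x1 = 0 -> Dm A h x2 = 0 -> Dm A h x3 = 0 ->
  Hf h x1 x2 <> 0 -> Hf h x1 x3 <> 0 -> Hf h x2 x3 <> 0 -> forall j, mA A x1 j = 0.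
Proof.
  intros Hg Hi HA D1 D2 D3 N12 N13 N23.
  destruct (inv_props g h Hg Hi) as [Hs _].
  destruct (eig_Dm g h A x1 Hg Hi (Hf_nz_l _ _ _ N12) D1) as [a1 E1].
  destruct (eig_Dm g h A x2 Hg Hi (Hf_nz_l _ _ _ N23) D2) as [a2 E2].
  destruct (eig_Dm g h A x3 Hg Hi (Hf_nz_r _ _ _ Hs N23) D3) as [a3 E3].
  pose proof (pairrel h A x1 x2 a1 a2 Hs HA E1 E2 N12).
  pose proof (pairrel h A x1 x3 a1 a3 Hs HA E1 E3 N13).
  pose proof (pairrel h A x2 x3 a2 a3 Hs HA E2 E3 N23).
  intros j. rewrite E1. replace a1 with 0 by lra. ring.
Qed.

Lemma Hf_lc_lc h (Hs : forall i j, h i j = h j i) a x b y :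
  Hf h (lc a x b y) (lc a x b y) = a * a * Hf h x x + 2 * a * b * Hf h x y + b * b * Hf h y y.
Proof. rewrite Hf_lc_l, !Hf_lc_r. rewrite (Hf_sym h y x Hs). ring. Qed.

Lemma dot_nonneg x : 0 <= dot x x.
Proof. unfold dot, sumI. pose proof (Rle_0_sqr (x I0)); pose proof (Rle_0_sqr (x I1));
  pose proof (Rle_0_sqr (x I2)); pose proof (Rle_0_sqr (x I3)); unfold Rsqr in *; lra. Qed.

Lemma h_indef g h : symmetric g -> is_inverse g h -> indefinite g ->
  (exists p, Hf h p p > 0) /\ (exists q, Hf h q q < 0).
Proof.
  intros Hg Hi [[v Hv] [w Hw]].
  assert (E : forall v, Hf h (gv g v) (gv g v) = sumI (fun i => sumI (fun j => g i j * v i * v j))).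
  { intros z. rewrite Hf_gv; auto. unfold dot, gv, sumI; ring. }
  split; [exists (gv g v) | exists (gv g w)]; rewrite E; auto.
Qed.

Lemma null_exists h p q : (forall i j, h i j = h j i) -> Hf h p p > 0 -> Hf h q q < 0 ->
  exists n0, Hf h n0 n0 = 0 /\ dot n0 n0 > 0.
Proof.
  intros Hs Hp Hq.
  set (P := Hf h p p) in *. set (C := Hf h p q). set (Qq := Hf h q q) in *.
  assert (HD : 0 <= C * C - P * Qq) by nra.
  set (s := sqrt (C * C - P * Qq)).
  assert (Hs2 : s * s = C * C - P * Qq) by (apply sqrt_sqrt; auto).
  set (t0 := (- C - s) / Qq).
  assert (Ht : Qq * t0 = - C - s) by (unfold t0; field; lra).
  assert (Hroot : P + 2 * t0 * C + t0 * t0 * Qq = 0).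
  { assert (Qq * (P + 2 * t0 * C + t0 * t0 * Qq) = 0) by nra.
    apply Rmult_integral in H. destruct H; lra. }
  exists (lc 1 p t0 q). split.
  - rewrite Hf_lc_lc; auto. fold P C Qq. lra.
  - pose proof (Rle_0_sqr t0). unfold Rsqr in *.
    apply Rnot_le_gt; intros Hle.
    assert (Z : dot (lc 1 p t0 q) (lc 1 p t0 q) = 0).
    { assert (0 <= dot (lc 1 p t0 q) (lc 1 p t0 q)).
      { apply dot_nonneg. }
      lra. }
    pose proof (sumsq0 _ Z) as Zi.
    assert (Ep : p = fun i => - t0 * q i).
    { apply functional_extensionality; intros i. specialize (Zi i). unfold lc in Zi. lra. }
    assert (P = t0 * t0 * Qq).
    { unfold P, Qq. rewrite Ep. unfold Hf, sumI; ring. }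
    nra.
Qed.

Definition xiv (h : mat) (n0 y : vec) : vec := lc (Hf h y y) n0 (-2 * Hf h n0 y) y.

Lemma xi_null h n0 y : (forall i j, h i j = h j i) -> Hf h n0 n0 = 0 -> Hf h (xiv h n0 y) (xiv h n0 y) = 0.
Proof.
  intros Hs Hn. unfold xiv. rewrite Hf_lc_lc; auto. rewrite Hn. ring.
Qed.

Lemma G_dr h n0 d r : (forall i j, h i j = h j i) -> Hf h n0 n0 = 0 -> Hf h n0 d = 0 ->
  Hf h (xiv h n0 d) (xiv h n0 r) = -2 * Hf h d d * (Hf h n0 r * Hf h n0 r).
Proof.
  intros Hs Hn Hd. unfold xiv. rewrite Hf_lc_l, !Hf_lc_r. rewrite Hn, Hd. ring.
Qed.

Lemma step1 g h n0 : symmetric g -> is_inverse g h -> Hf h n0 n0 = 0 -> dot n0 n0 > 0 ->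
  exists d, Hf h n0 d = 0 /\ Hf h d d <> 0.
Proof.
  intros Hg Hi Hn Hpos.
  destruct (inv_props g h Hg Hi) as [Hs _].
  set (r := gv g n0).
  assert (Lr : Hf h n0 r = dot n0 n0).
  { unfold r. rewrite Hf_sym; auto. rewrite Hf_gv; auto. }
  apply NNPP; intros N.
  assert (HQ : forall d, Hf h n0 d = 0 -> Hf h d d = 0).
  { intros d Hd. apply NNPP; intros Nd. apply N. eauto. }
  set (L := Hf h n0 r) in *.
  apply (rank_contra g h (upv h n0) (lc (2 * L) (upv h r) (- Hf h r r) (upv h n0)) (/ (L * L)) Hg Hi).
  intros z.
  pose proof (HQ (lc L z (- Hf h n0 z) r)) as Hz.
  rewrite Hf_lc_r in Hz. fold L in Hz.
  rewrite Hf_lc_lc in Hz by auto.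
  rewrite (dot_comm (upv h n0) z), (dot_comm (lc _ _ _ _) z), dot_lc_r, !dot_upv.
  rewrite (Hf_sym h r z Hs).
  assert (L <> 0) by lra.
  apply Rmult_eq_reg_l with (L * L); [| nra].
  field_simplify; auto.
  specialize (Hz ltac:(ring)).
  nra.
Qed.

Lemma Mvanish g h A n0 : symmetric g -> is_inverse g h -> antisymmetric A ->
  Hf h n0 n0 = 0 -> dot n0 n0 > 0 ->
  (forall y, Dm A h (xiv h n0 y) = 0) -> forall y j, mA A (xiv h n0 y) j = 0.
Proof.
  intros Hg Hi HA Hn Hpos HD.
  destruct (inv_props g h Hg Hi) as [Hs _].
  set (r := gv g n0).
  assert (Lr : Hf h n0 r = dot n0 n0).
  { unfold r. rewrite Hf_sym; auto. rewrite Hf_gv; auto. }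
  destruct (step1 g h n0 Hg Hi Hn Hpos) as [d [Ld Qd]].
  assert (Gdr : Hf h (xiv h n0 d) (xiv h n0 r) <> 0).
  { rewrite G_dr; auto. rewrite Lr. intros E.
    assert (dot n0 n0 * dot n0 n0 <> 0) by nra.
    apply Rmult_integral in E. destruct E as [E|E]; [|auto]. apply Rmult_integral in E.
    destruct E; lra. }
  assert (PGd : PolyF (fun y => Hf h (xiv h n0 y) (xiv h n0 d))).
  { unfold xiv, lc, Hf, sumI. polyF. }
  assert (PGr : PolyF (fun y => Hf h (xiv h n0 y) (xiv h n0 r))).
  { unfold xiv, lc, Hf, sumI. polyF. }
  destruct (PolyF_common _ _ r d PGd PGr) as [y0 [N1 N2]].
  { rewrite Hf_sym; auto. }
  { auto. }
  intros y j. apply NNPP; intros N.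
  assert (PM : PolyF (fun y => mA A (xiv h n0 y) j)).
  { unfold mA, xiv, lc, Hf, sumI. polyF. }
  destruct (PolyF_common (fun y => Hf h (xiv h n0 y) (xiv h n0 d) * Hf h (xiv h n0 y) (xiv h n0 r))
     _ y0 y (PolyF_mul _ _ PGd PGr) PM) as [y1 [P1 M1]].
  { intros E. apply Rmult_integral in E. destruct E; auto. }
  { auto. }
  apply M1. apply (triple g h A (xiv h n0 y1) (xiv h n0 d) (xiv h n0 r)); auto.
  - intros E; apply P1; rewrite E; ring.
  - intros E; apply P1; rewrite E; ring.
Qed.

Lemma Azero g h A n0 : symmetric g -> is_inverse g h -> antisymmetric A ->
  Hf h n0 n0 = 0 -> dot n0 n0 > 0 ->
  (forall y j, mA A (xiv h n0 y) j = 0) -> forall i j, A i j = 0.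
Proof.
  intros Hg Hi HA Hn Hpos HM.
  destruct (inv_props g h Hg Hi) as [Hs _].
  set (r := gv g n0).
  assert (Lr : Hf h n0 r = dot n0 n0).
  { unfold r. rewrite Hf_sym; auto. rewrite Hf_gv; auto. }
  set (L := Hf h n0 r) in *. set (Qr := Hf h r r). set (c := mA A n0).
  set (phi := fun z => 2 * L * Hf h r z - Hf h n0 z * Qr).
  assert (Mexp : forall y j, mA A (xiv h n0 y) j = Hf h y y * c j + (-2 * Hf h n0 y) * mA A y j).
  { intros; unfold xiv; rewrite mA_lc; auto. }
  assert (Key : forall z j, 2 * L * L * mA A z j = phi z * c j).
  { intros z j.
    pose proof (HM (lc 1 r 1 z) j) as E1. pose proof (HM r j) as E2. pose proof (HM z j) as E3.
    rewrite Mexp in E1, E2, E3.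
    rewrite Hf_lc_lc, Hf_lc_r, mA_lc in E1 by auto.
    fold L Qr c in E1, E2. fold c in E3.
    assert (E : L * mA A z j = Hf h r z * c j - Hf h n0 z * mA A r j) by nra.
    unfold phi.
    transitivity (2 * L * (L * mA A z j)); [ring|]. rewrite E.
    transitivity (2 * L * Hf h r z * c j - Hf h n0 z * (2 * L * mA A r j)); [ring|].
    replace (2 * L * mA A r j) with (Qr * c j) by nra. ring. }
  assert (Skew : forall z, phi z * dot z c = 0).
  { intros z.
    assert (dot z (fun j => 2 * L * L * mA A z j) = dot z (fun j => phi z * c j)) by (apply dot_ext; auto).
    rewrite !dot_scal in H. rewrite anti_dot0 in H; auto. lra. }
  intros i0 j0. apply NNPP; intros N.
  pose proof (Key (ev i0) j0) as K. rewrite mA_ev in K.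
  assert (L <> 0) by lra.
  assert (Nphi : phi (ev i0) <> 0).
  { intros E. rewrite E in K. assert (2 * L * L * A i0 j0 <> 0).
    { repeat apply Rmult_integral_contrapositive_currified; auto; lra. }
    lra. }
  assert (Nc : c j0 <> 0).
  { intros E. rewrite E in K. assert (2 * L * L * A i0 j0 <> 0).
    { repeat apply Rmult_integral_contrapositive_currified; auto; lra. }
    lra. }
  assert (Pphi : PolyF phi).
  { unfold phi, Hf, sumI. polyF. }
  assert (Pdc : PolyF (fun z => dot z c)).
  { unfold dot, sumI. polyF. }
  destruct (PolyF_common phi (fun z => dot z c) (ev i0) c Pphi Pdc Nphi) as [z [Z1 Z2]].
  { pose proof (dot_pos c (ex_intro _ j0 Nc)). lra. }
  apply Z1. specialize (Skew z). apply Rmult_integral in Skew. destruct Skew; [auto| contradiction].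
Qed.

Lemma core g h A n0 : symmetric g -> is_inverse g h -> antisymmetric A ->
  Hf h n0 n0 = 0 -> dot n0 n0 > 0 -> (exists i j, A i j <> 0) ->
  exists y, Dm A h (xiv h n0 y) <> 0.
Proof.
  intros Hg Hi HA Hn Hpos [i [j Nij]].
  apply NNPP; intros N. apply Nij.
  apply (Azero g h A n0 Hg Hi HA Hn Hpos).
  apply (Mvanish g h A n0 Hg Hi HA Hn Hpos).
  intros y. apply NNPP; intros Ny. apply N. eauto.
Qed.

Lemma eps_swap34 a b c d : eps a b d c = - eps a b c d.
Proof. unfold eps. field. Qed.
Lemma eps_swap12 a b c d : eps b a c d = - eps a b c d.
Proof. unfold eps. field. Qed.
Lemma eps_diag a c d : eps a a c d = 0.
Proof. unfold eps. field. Qed.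

Definition wedge (x y : vec) : mat := fun i j => x i * y j - x j * y i.

Lemma actH g h xi al i j :
  act (hodge g h) (wedge xi al) i j =
  sqrt (Rabs (det4 g)) * sumI (fun c => sumI (fun d => eps c d i j * upv h xi c * upv h al d)).
Proof.
  unfold act, hodge, wedge, upv, sumI.
  rewrite !eps_diag.
  rewrite !(eps_swap12 I0 I1), !(eps_swap12 I0 I2), !(eps_swap12 I0 I3),
    !(eps_swap12 I1 I2), !(eps_swap12 I1 I3), !(eps_swap12 I2 I3).
  field.
Qed.

Lemma actId xi al i j : act Id22 (wedge xi al) i j = wedge xi al i j.
Proof. unfold act, Id22, delta, wedge, sumI; destruct i, j; simpl; field. Qed.

Lemma act_kappa g h C1 C2 X i j :
  act (kappa_of g h C1 C2) X i j = C1 * act (hodge g h) X i j + C2 * act Id22 X i j.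
Proof. unfold act, kappa_of, sumI; ring. Qed.

Lemma act_lin k X Y a b i j :
  act k (fun i j => a * X i j - b * Y i j) i j = a * act k X i j - b * act k Y i j.
Proof. unfold act, sumI; ring. Qed.

Lemma cycE_id xi u w k r s :
  let E := fun r s => sumI (fun c => sumI (fun d => eps c d r s * u c * w d)) in
  xi k * E r s + xi r * E s k + xi s * E k r =
   sumI (fun i => xi i * u i) * sumI (fun d => eps k r s d * w d)
 - sumI (fun i => xi i * w i) * sumI (fun c => eps k r s c * u c).
Proof.
  unfold sumI, eps; destruct k, r, s; simpl; field.
Qed.

Lemma Ycyc g h C1 C2 xi al :
  sumI (fun i => xi i * upv h xi i) = 0 -> sumI (fun i => xi i * upv h al i) = 0 ->
  forall i j k, xi i * act (kappa_of g h C1 C2) (wedge xi al) j k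
              + xi j * act (kappa_of g h C1 C2) (wedge xi al) k i
              + xi k * act (kappa_of g h C1 C2) (wedge xi al) i j = 0.
Proof.
  intros Hu Hw i j k.
  rewrite !act_kappa, !actH, !actId.
  pose proof (cycE_id xi (upv h xi) (upv h al) i j k) as e. simpl in e.
  rewrite Hu, Hw in e.
  set (E := fun r s => sumI (fun c => sumI (fun d => eps c d r s * upv h xi c * upv h al d))) in *.
  transitivity (C1 * sqrt (Rabs (det4 g)) * (xi i * E j k + xi j * E k i + xi k * E i j)
     + C2 * (xi i * wedge xi al j k + xi j * wedge xi al k i + xi k * wedge xi al i j)).
  { unfold E; ring. }
  unfold E. rewrite e. unfold wedge; ring.
Qed.

Lemma act_anti g h C1 C2 xi al i j :
  act (kappa_of g h C1 C2) (wedge xi al) i j = - act (kappa_of g h C1 C2) (wedge xi al) j i.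
Proof.
  rewrite !act_kappa, !actH, !actId.
  unfold sumI. rewrite !(fun a b => eps_swap34 a b i j). unfold wedge. ring.
Qed.

Lemma pair_wedge A x y : antisymmetric A -> pair (wedge x y) A = dot y (mA A x).
Proof. intros HA. unfold pair, wedge, dot, mA, sumI. antirw A HA. field. Qed.

Lemma pair_wave Phi Xr Xi x A :
  pair (wave Phi Xr Xi x) A = cos (Phi x) * pair Xr A - sin (Phi x) * pair Xi A.
Proof. unfold pair, wave, sumI; ring. Qed.

Definition Phiv (xi : vec) : point -> R := fun x => sumI (fun a => xi a * x a).

Lemma Phi_shift xi x a t : Phiv xi (shift x a t) = Phiv xi x + xi a * t.
Proof. unfold Phiv, shift, sumI; destruct a; simpl; ring. Qed.

Lemma Phi_grad xi x a : partial_is (Phiv xi) a x (xi a).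
Proof.
  unfold partial_is.
  replace (fun t => Phiv xi (shift x a t)) with (fun t => Phiv xi x + xi a * t)
    by (apply functional_extensionality; intros; rewrite Phi_shift; auto).
  apply is_derive_Reals. auto_derive. auto. ring.
Qed.

Lemma wave_d xi x a z1 z2 :
  partial_is (fun y => cos (Phiv xi y) * z1 - sin (Phiv xi y) * z2) a x
    (- sin (Phiv xi x) * xi a * z1 - cos (Phiv xi x) * xi a * z2).
Proof.
  unfold partial_is.
  replace (fun t => cos (Phiv xi (shift x a t)) * z1 - sin (Phiv xi (shift x a t)) * z2)
    with (fun t => cos (Phiv xi x + xi a * t) * z1 - sin (Phiv xi x + xi a * t) * z2)
    by (apply functional_extensionality; intros; rewrite Phi_shift; auto).
  apply is_derive_Reals. auto_derive. auto. rewrite Rmult_0_r, Rplus_0_r. ring.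
Qed.

Lemma closed_wave xi Zr Zi :
  (forall i j k, xi i * Zr j k + xi j * Zr k i + xi k * Zr i j = 0) ->
  (forall i j k, xi i * Zi j k + xi j * Zi k i + xi k * Zi i j = 0) ->
  closed2 (wave (Phiv xi) Zr Zi).
Proof.
  intros Hr Hi x i j k.
  eexists; eexists; eexists.
  split; [apply (wave_d xi x i (Zr j k) (Zi j k))|].
  split; [apply (wave_d xi x j (Zr k i) (Zi k i))|].
  split; [apply (wave_d xi x k (Zr i j) (Zi i j))|].
  transitivity (- sin (Phiv xi x) * (xi i * Zr j k + xi j * Zr k i + xi k * Zr i j)
                - cos (Phiv xi x) * (xi i * Zi j k + xi j * Zi k i + xi k * Zi i j)); [ring|].
  rewrite Hr, Hi. ring.
Qed.

Lemma Dm_nz A h x : Dm A h x <> 0 -> exists a, x a <> 0.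
Proof.
  intros N. apply NNPP; intros N2. apply N.
  assert (E : forall a, x a = 0) by (intros a; apply NNPP; intros Na; apply N2; eauto).
  unfold Dm, dot, upv, mA, sumI. rewrite !E. ring.
Qed.

Lemma pair_zero X A : (forall i j, X i j = 0) -> pair X A = 0.
Proof. intros E. unfold pair, sumI. rewrite !E. ring. Qed.

Lemma PolyF_Dm A h n0 : PolyF (fun y => Dm A h (xiv h n0 y)).
Proof. unfold Dm, dot, upv, mA, xiv, lc, Hf, sumI. polyF. Qed.

Theorem mainTheorem8 :
  forall (g ginv : mat) (C1 C2 : R),
    symmetric g -> is_inverse g ginv -> indefinite g ->
    C1 <> 0 ->
    ~ decomposable (kappa_of g ginv C1 C2).
Proof.
  intros g h C1 C2 Hg Hi Hind HC1 [A [B [[HAa HAn] [[HBa HBn] Hdec]]]].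
  destruct (inv_props g h Hg Hi) as [Hs _].
  destruct (h_indef g h Hg Hi Hind) as [[p Hp] [q Hq]].
  destruct (null_exists h p q Hs Hp Hq) as [n0 [Hn Hpos]].
  destruct (core g h A n0 Hg Hi HAa Hn Hpos HAn) as [yA NA].
  destruct (core g h B n0 Hg Hi HBa Hn Hpos HBn) as [yB NB].
  destruct (PolyF_common _ _ yA yB (PolyF_Dm A h n0) (PolyF_Dm B h n0) NA NB) as [y [DA DB]].
  set (xi := xiv h n0 y) in *.
  assert (Hxx : Hf h xi xi = 0) by (apply xi_null; auto).
  set (u := upv h xi).
  set (al := lc (dot u u) (mA A xi) (- dot u (mA A xi)) u).
  set (be := lc (dot u u) (mA B xi) (- dot u (mA B xi)) u).
  assert (Hu : sumI (fun i => xi i * upv h xi i) = 0).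
  { change (dot xi (upv h xi) = 0). rewrite dot_upv. auto. }
  assert (Hwal : forall M, sumI (fun i => xi i * upv h (lc (dot u u) (mA M xi) (- dot u (mA M xi)) u) i) = 0).
  { intros M. change (dot xi (upv h (lc (dot u u) (mA M xi) (- dot u (mA M xi)) u)) = 0).
    rewrite dot_upv, Hf_sym, <- dot_upv; auto. fold u. rewrite dot_comm, dot_lc_r. ring. }
  assert (PA : pair (wedge xi al) A = Dm A h xi).
  { rewrite pair_wedge; auto. unfold al. rewrite dot_comm, dot_lc_r. unfold Dm. fold u.
    rewrite (dot_comm (mA A xi) u). ring. }
  assert (PB : pair (wedge xi be) B = Dm B h xi).
  { rewrite pair_wedge; auto. unfold be. rewrite dot_comm, dot_lc_r. unfold Dm. fold u.
    rewrite (dot_comm (mA B xi) u). ring. }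
  set (k := kappa_of g h C1 C2).
  assert (Hpw : plane_wave k (Phiv xi) (wedge xi al) (wedge xi be)
                  (act k (wedge xi al)) (act k (wedge xi be))).
  { unfold plane_wave.
    split.
    { exists xi. split.
      - apply (Dm_nz A h xi DA).
      - intros x a. apply Phi_grad. }
    split.
    { intros i j; unfold wedge; ring. }
    split.
    { intros i j; unfold wedge; ring. }
    split.
    { intros i j; apply act_anti. }
    split.
    { intros i j; apply act_anti. }
    split.
    { intros Hall. apply DA. rewrite <- PA. apply pair_zero. intros i j; apply Hall. }
    split.
    { apply closed_wave; intros; unfold wedge; ring. }
    split.
    { apply closed_wave; intros; apply Ycyc. all: first [exact Hu | exact (Hwal A) | exact (Hwal B)]. }
    intros x. apply functional_extensionality; intros i; apply functional_extensionality; intros j.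
    unfold wave. rewrite <- act_lin. auto. }
  destruct (Hdec _ _ _ _ _ Hpw) as [HA0 | HB0].
  - specialize (HA0 (fun _ => 0)). rewrite pair_wave in HA0.
    assert (Phiv xi (fun _ => 0) = 0) by (unfold Phiv, sumI; ring).
    rewrite H, cos_0, sin_0 in HA0. apply DA. rewrite <- PA. lra.
  - destruct (Dm_nz B h xi DB) as [a Ha].
    specialize (HB0 (fun b => if idx_eq_dec a b then - (PI / 2) / xi a else 0)).
    rewrite pair_wave in HB0.
    assert (Phiv xi (fun b => if idx_eq_dec a b then - (PI / 2) / xi a else 0) = - (PI / 2)).
    { unfold Phiv, sumI; destruct a; simpl; field; auto. }
    rewrite H, cos_neg, sin_neg, cos_PI2, sin_PI2 in HB0. apply DB. rewrite <- PB. lra.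
Qed.
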